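(* Let $H$ be a Hermitian operator (Hamiltonian) on $\mathbb{C}^d$, let $\{\mathcal{O}_i\}_{i\in\mathcal{I}}$ be a finite family of Hermitian operators on $\mathbb{C}^d$ indexed by a finite set $\mathcal{I}$, and let $\rho$ be a density matrix on $\mathbb{C}^d$ with $o_i=\mathrm{tr}(\rho\,\mathcal{O}_i)$ for all $i\in\mathcal{I}$. Define the feasible set $$\Omega_{\mathcal{I}}=\{X:\ X\succeq 0,\ \mathrm{tr}(X)=1,\ \mathrm{tr}(X\mathcal{O}_i)=o_i\ \forall i\in\mathcal{I}\}.$$ Then for every unitary $U\in\mathcal{U}(d)$, $$\min_{X\in\Omega_{\mathcal{I}}}\big[\mathrm{tr}(HX)-\mathrm{tr}(HUXU^\dagger)\big]\ \le\ \min_{X\in\Omega_{\mathcal{I}}}\max_{V\in\mathcal{U}(d)}\big[\mathrm{tr}(HX)-\mathrm{tr}(HVXV^\dagger)\big]\ \le\ \mathcal{E}(\rho,H).$$ In particular, if $\tilde\rho\in\Omega_{\mathcal{I}}$ is any feasible state (e.g. a minimizer over $\Omega_{\mathcal{I}}$ of some linear function, or of the purity $\mathrm{tr}(X^2)$), with spectral decomposition $\tilde\rho=\sum_j\tilde r_j|\tilde r_j\rangle\langle\tilde r_j|$, $\tilde r_1\ge\tilde r_2\ge\cdots$, and $H=\sum_j E_j|E_j\rangle\langle E_j|$ with $E_1\le E_2\le\cdots$, and $\tilde U_\star=\sum_j|E_j\rangle\langle\tilde r_j|$, then $$\mathcal{E}_{\rm LB}:=\min_{X\in\Omega_{\mathcal{I}}}\big[\mathrm{tr}(HX)-\mathrm{tr}(H\tilde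 U_\star X\tilde U_\star^\dagger)\big]\ \le\ \mathcal{E}(\rho,H).$$
   Context: For a density matrix $\rho$ on $\mathbb{C}^d$ and a Hamiltonian $H$, the ergotropy is $\mathcal{E}(\rho,H)=\max_{U\in\mathcal{U}(d)}\big[\mathrm{tr}(\rho H)-\mathrm{tr}(HU\rho U^\dagger)\big]$, where $\mathcal{U}(d)$ is the group of $d\times d$ unitaries. *)

(* Defs.v *)
From HB Require Import structures.
From mathcomp Require Import all_boot all_order all_algebra.
From mathcomp Require Import complex.
From mathcomp Require Import classical_sets reals constructive_ereal ereal.

Set Implicit Arguments.
Unset Strict Implicit.
Unset Printing Implicit Defensive.

Import Order.TTheory GRing.Theory Num.Theory.
Local Open Scope ring_scope.
Local Open Scope classical_set_scope.

Definition dagger (R : realType) (m n : nat) (A : 'M[R[i]]_(m, n)) : 'M[R[i]]_(n, m) :=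
  (map_mx Num.conj A)^T.

Definition herm_op (R : realType) (d : nat) (A : 'M[R[i]]_d) : Prop :=
  dagger A = A.

Definition psd_op (R : realType) (d : nat) (X : 'M[R[i]]_d) : Prop :=
  herm_op X /\ forall v : 'cV[R[i]]_d, 0 <= (dagger v *m X *m v) 0 0.

Definition density_op (R : realType) (d : nat) (X : 'M[R[i]]_d) : Prop :=
  psd_op X /\ \tr X = 1.

Definition unitary_op (R : realType) (d : nat) (U : 'M[R[i]]_d) : Prop :=
  U *m dagger U = 1%:M.

Definition Omega (R : realType) (d : nat) (I : finType)
    (O : I -> 'M[R[i]]_d) (o : I -> R[i]) : set 'M[R[i]]_d :=
  [set X | psd_op X /\ \tr X = 1 /\ forall k : I, \tr (X *m O k) = o k].

(* tr(HX) - tr(H U X U^dagger); real for Hermitian H, X, so we take the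
   real part to land in R *)
Definition work (R : realType) (d : nat) (H X U : 'M[R[i]]_d) : R :=
  complex.Re (\tr (H *m X) - \tr (H *m (U *m X *m dagger U))).

Definition ergotropy (R : realType) (d : nat) (rho H : 'M[R[i]]_d) : \bar R :=
  ereal_sup [set (work H rho U)%:E | U in unitary_op (d:=d)].

(* Main.v *)
Require Import Defs.
From HB Require Import structures.
From mathcomp Require Import all_boot all_order all_algebra.
From mathcomp Require Import complex.
From mathcomp Require Import classical_sets reals constructive_ereal ereal.

Import Order.TTheory GRing.Theory Num.Theory.
Local Open Scope ring_scope.
Local Open Scope classical_set_scope.

Lemma daggerK (R : realType) (n : nat) (A : 'M[R[i]]_n) : dagger (dagger A) = A.
Proof. by apply/matrixP=> a b; rewrite !mxE conjCK. Qed.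

Lemma daggerM (R : realType) (n : nat) (A B : 'M[R[i]]_n) :
  dagger (A *m B) = dagger B *m dagger A.
Proof.
apply/matrixP=> a b; rewrite !mxE rmorph_sum.
by apply: eq_bigr => k _; rewrite !mxE rmorphM mulrC.
Qed.

Theorem mainTheorem1 (R : realType) (d : nat) (I : finType)
    (H : 'M[R[i]]_d) (O : I -> 'M[R[i]]_d) (rho : 'M[R[i]]_d) (o : I -> R[i]) :
  herm_op H ->
  (forall k : I, herm_op (O k)) ->
  density_op rho ->
  (forall k : I, o k = \tr (rho *m O k)) ->
  (forall U : 'M[R[i]]_d, unitary_op U ->
     (ereal_inf [set (work H X U)%:E | X in Omega O o]
        <= ereal_inf [set ergotropy X H | X in Omega O o])%E /\
     (ereal_inf [set ergotropy X H | X in Omega O o] <= ergotropy rho H)%E)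
  /\
  (forall (rt : 'M[R[i]]_d) (P Q : 'M[R[i]]_d) (r E : 'I_d -> R),
     Omega O o rt ->
     unitary_op P -> unitary_op Q ->
     rt = \sum_(j < d) (Complex (r j) 0) *: (col j P *m dagger (col j P)) ->
     (forall j k : 'I_d, (j <= k)%N -> r k <= r j) ->
     H = \sum_(j < d) (Complex (E j) 0) *: (col j Q *m dagger (col j Q)) ->
     (forall j k : 'I_d, (j <= k)%N -> E j <= E k) ->
     let Ustar := \sum_(j < d) col j Q *m dagger (col j P) in
     (ereal_inf [set (work H X Ustar)%:E | X in Omega O o] <= ergotropy rho H)%E).
Proof.
move=> hH hO [[hrho hpsd] htr] ho.
have rhoO : Omega O o rho by split; [split|split=> // k; rewrite ho].
have key : forall U, unitary_op U ->
   (ereal_inf [set (work H X U)%:E | X in Omega O o]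
        <= ereal_inf [set ergotropy X H | X in Omega O o])%E /\
     (ereal_inf [set ergotropy X H | X in Omega O o] <= ergotropy rho H)%E.
  move=> U hU; split; last first.
    by apply: ereal_inf_lbound; exists rho.
  apply: le_ereal_inf_tmp => _ [X hX <-].
  apply: (@le_trans _ _ (work H X U)%:E).
    by apply: ereal_inf_lbound; exists X.
  by apply: ereal_sup_ubound; exists U.
split; first exact: key.
move=> rt P Q r E hrt hP hQ _ _ _ _; cbv zeta.
set Ustar := \sum_(j < d) col j Q *m dagger (col j P).
have eU : Ustar = Q *m dagger P.
  apply/matrixP=> a b; rewrite /Ustar summxE !mxE.
  apply: eq_bigr => j _; rewrite !mxE big_ord1 !mxE; done.
have uU : unitary_op Ustar.
  have hP' : dagger P *m P = 1%:M by apply: mulmx1C.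
  rewrite eU /unitary_op daggerM daggerK -mulmxA (mulmxA _ P) hP' mul1mx.
  exact: hQ.
have [h1 h2] := key _ uU.
move: h1 h2; exact: le_trans.
Qed.
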